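(* Let $P$ be a valid path, let $V_P$ be the revenue computed by \textsc{MaxRev}$(P)$, and suppose $V_P<\frac{1}{\alpha(m_T^P)}B(P)$. Then at least one of the two paths $P'\in\{P_1,P_2\}$ returned by \textsc{TollPartition} applied to $P$ satisfies $$\frac{1}{\alpha(m_T^{P'})}B(P')\ \ge\ \frac{1}{\alpha(m_T^P)}B(P).$$
   Context: Setting: $G=(V,A)$ is a directed multigraph with $A=A_T\cup A_U$ partitioned into toll arcs and toll-free arcs, fixed costs $c:A_T\to\mathbf{N}$, $d:A_U\to\mathbf{N}$, and vertices $s,t$ such that there is an $s$–$t$ path using only toll-free arcs. Under a nonnegative toll vector $T$ a toll arc $e$ costs $c(e)+T(e)$ and a toll-free arc costs $d(e)$; path length is the sum of arc costs. $\mathcal{N}_T(P)$ is the network with all toll arcs not on $P$ deleted. An $s$–$t$ path $P$ is valid if it contains $m_T^P\ge1$ toll arcs and is a shortest $s$–$t$ path in $\mathcal{N}_0(P)$. For a path $P$ with toll arcs $\tau_1,\dots,\tau_m$ (in traversal order, $m=m_T^P$), set $\mathrm{TERM}(\tau_0)=s$, $\mathrm{INIT}(\tau_{m+1})=t$; $\mathcal{U}_{i,j}$ ($0\le i<j\le m+1$) is the length of a shortest toll-free path from $\mathrm{TERM}(\tau_i)$ to $\mathrm{INIT}(\tau_j)$ ($+\infty$ if none), $\upsilon_{i,j}$ is such a path, and $\mathcal{L}_{k,l}=\sum_{i=k}^{l-1}\mathcal{U}_{i,i+1}+\sum_{i=k+1}^{l-1}c(\tau_i)$. Let $\mathcal{L}_\infty$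 be the length of a shortest toll-free $s$–$t$ path and $\mathcal{L}(P)$ the length of $P$ with all tolls zero; $B(P)=\mathcal{L}_\infty-\mathcal{L}(P)$. Define $\alpha(1)=1$ and, for $k\ge2$, $\alpha(k)=\frac12\max\{1+\alpha(i)+\alpha(j):\ 0<i\le j<k,\ i+j\le k\}$. \textsc{MaxRev}$(P)$: set $k:=1$; while $k<m+1$: compute $t_k=\min_{0\le i<k<j\le m+1}\{\mathcal{U}_{i,j}-\mathcal{L}_{i,j}-\sum_{l=i+1}^{k-1}t_l\}$, let $(i'(k),j'(k))$ be the minimizing pair (ties broken by largest $j$, then smallest $i$), set $t_l:=0$ and $(i'(l),j'(l)):=(i'(k),j'(k))$ for all $k<l<j'(k)$, and set $k:=j'(k)$. Output tolls $T(\tau_k)=t_k$ on $P$ ($+\infty$ off $P$), revenue $V_P=\sum_{k=1}^m t_k$, and pairs $(i'(k),j'(k))_{k=1}^m$. \textsc{TollPartition}$(P)$: starting from $l:=m$, repeatedly record the pair $(i'(l),j'(l))$ and set $l:=i'(l)$ until $l=0$; let $q$ be the number of recorded pairs and let $(i(1),j(1)),\dots,(i(q),j(q))$ be the recorded pairs in reverse order of recording (so $i(1)=0$, $j(q)=m+1$). $P_1$ is the $s$–$t$ path that uses $\upsilon_{i(h),j(h)}$ for all odd $h$ and follows $P$ in between (from $\mathrm{INIT}(\tau_{j(h)})$ to $\mathrm{TERM}(\tau_{i(h+2)})$, from $s$ to $\mathrm{TERM}(\tau_{i(h)})$ before the first, and from $\mathrm{INIT}(\tau_{j(h)})$ to $t$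 after the last); $P_2$ is constructed in the same way from the even indices $h$. *)

(* Defs.v *)
From Stdlib Require Import ClassicalEpsilon.
From mathcomp Require Import all_boot all_order all_algebra.
Set Implicit Arguments. Unset Strict Implicit. Unset Printing Implicit Defensive.
Import Order.TTheory GRing.Theory Num.Theory.

(* Directed multigraph: vertices V, arcs A, arc a goes from src a to tgt a.
   toll a = true iff a is a toll arc (A_T); otherwise a is toll-free (A_U).
   w gives the fixed cost: w = c on toll arcs, w = d on toll-free arcs. *)
Section Network.
Variables (V A : finType) (src tgt : A -> V) (toll : pred A) (w : A -> nat)
          (s t : V).

Fixpoint walk (x y : V) (p : seq A) : bool :=
  if p is a :: p' then (src a == x) && walk (tgt a) y p' else x == y.

Definition spath (x y : V) (p : seq A) : bool :=
  walk x y p && uniq (x :: map tgt p).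

Definition cost (p : seq A) : nat := (\sum_(a <- p) w a)%N.

Definition toll_free (p : seq A) : bool := all (fun a => ~~ toll a) p.

Definition tf_rel : rel V :=
  fun u v => [exists a, [&& ~~ toll a, src a == u & tgt a == v]].
Definition tf_reach (x y : V) : bool := connect tf_rel x y.

Definition is_tf_dist (x y : V) (n : nat) : Prop :=
  (exists p, [/\ spath x y p, toll_free p & cost p = n]) /\
  (forall p, spath x y p -> toll_free p -> n <= cost p).

(* length of a shortest toll-free path from x to y (meaningful when
   tf_reach x y holds; otherwise the value +oo is represented by an
   unspecified number and never used) *)
Definition tf_dist (x y : V) : nat := epsilon (inhabits 0%N) (is_tf_dist x y).

Definition L_inf : nat := tf_dist s t.

Definition mT (p : seq A) : nat := count toll p.

Definition Bp (p : seq A) : int := (L_inf%:Z - (cost p)%:Z)%R.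

(* valid path: an s-t path with >= 1 toll arc which is a shortest s-t path
   in N_0(P) (toll arcs not on P deleted, tolls zero) *)
Definition valid (P : seq A) : Prop :=
  [/\ spath s t P, (0 < mT P)%N &
      forall q, spath s t q -> all (fun a => ~~ toll a || (a \in P)) q ->
        cost P <= cost q].

Section OnPath.
Variable P : seq A.

Definition taus : seq A := filter toll P.
Definition mP : nat := size taus.

Definition TERM (i : nat) : V :=
  if i is k.+1 then nth s (map tgt taus) k else s.
(* INIT(tau_j), with INIT(tau_{m+1}) = t *)
Definition INIT (j : nat) : V :=
  if j is k.+1 then nth t (map src taus) k else t.
Definition ctau (i : nat) : nat :=
  if i is k.+1 then nth 0%N (map w taus) k else 0%N.

Definition Ufin (i j : nat) : bool := tf_reach (TERM i) (INIT j).
Definition U (i j : nat) : nat := tf_dist (TERM i) (INIT j).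
Definition LL (i j : nat) : nat :=
  (\sum_(i <= l < j) U l l.+1 + \sum_(i.+1 <= l < j) ctau l)%N.

(* ts = [:: t_1; ...; t_(k-1)] (t_l stored at index l-1) *)
Definition mr_val (ts : seq int) (k : nat) (p : nat * nat) : int :=
  ((U p.1 p.2)%:Z - (LL p.1 p.2)%:Z
     - \sum_(p.1 <= l < k.-1) nth 0 ts l)%R.

Definition mr_better (ts : seq int) (k : nat) (p b : nat * nat) : bool :=
  (mr_val ts k p < mr_val ts k b)%R
  || ((mr_val ts k p == mr_val ts k b)
      && ((b.2 < p.2) || ((p.2 == b.2) && (p.1 < b.1)))).

(* pairs 0 <= i < k < j <= m+1 with U_{i,j} finite (pairs with
   U_{i,j} = +oo can never attain the minimum, as U_{0,m+1} < +oo) *)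
Definition mr_cands (k : nat) : seq (nat * nat) :=
  [seq ij <- [seq (i, j) | i <- iota 0 k, j <- iota k.+1 (mP.+1 - k)]
     | Ufin ij.1 ij.2].

Definition mr_best (ts : seq int) (k : nat) : nat * nat :=
  foldl (fun b p => if mr_better ts k p b then p else b) (0%N, mP.+1)
        (mr_cands k).

(* one run of the while loop, with fuel; returns ([t_1..], [(i'(1),j'(1));..]) *)
Fixpoint mr_loop (fuel k : nat) (ts : seq int) (prs : seq (nat * nat))
  : seq int * seq (nat * nat) :=
  if fuel is fuel'.+1 then
    if (k < mP.+1)%N then
      let p := mr_best ts k in
      let tk := mr_val ts k p in
      mr_loop fuel' p.2 (ts ++ tk :: nseq (p.2 - k.+1) 0%R)
              (prs ++ nseq (p.2 - k) p)
    else (ts, prs)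
  else (ts, prs).

Definition MaxRev : seq int * seq (nat * nat) := mr_loop mP.+1 1 [::] [::].
Definition tolls : seq int := MaxRev.1.
Definition mr_pairs : seq (nat * nat) := MaxRev.2.
Definition VP : int := (\sum_(x <- tolls) x)%R.

(* recorded pairs, in reverse order of recording *)
Fixpoint tp_loop (fuel l : nat) : seq (nat * nat) :=
  if fuel is f.+1 then
    if l is 0 then [::]
    else let p := nth (0%N, 0%N) mr_pairs l.-1 in rcons (tp_loop f p.1) p
  else [::].
Definition TP : seq (nat * nat) := tp_loop mP.+1 mP.

Definition tpos : seq nat :=
  [seq i <- iota 0 (size P) | nth false (map toll P) i].
(* number of arcs of P before INIT(tau_k) (k = 0: start; k = m+1: all) *)
Definition before (k : nat) : nat :=
  if k is k'.+1 then nth (size P) tpos k' else 0%N.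
(* number of arcs of P up to TERM(tau_i) *)
Definition upto (i : nat) : nat :=
  if i is k.+1 then (nth 0%N tpos k).+1 else 0%N.

Variable ups : nat -> nat -> seq A.

Fixpoint build (start : nat) (L : seq (nat * nat)) : seq A :=
  if L is (i, j) :: L' then
    drop (before start) (take (upto i) P) ++ ups i j ++ build j L'
  else drop (before start) P.

(* P_1 uses the pairs with odd h (0-based even index), P_2 even h *)
Definition P1 : seq A :=
  build 0 [seq nth (0%N, 0%N) TP h | h <- iota 0 (size TP) & ~~ odd h].
Definition P2 : seq A :=
  build 0 [seq nth (0%N, 0%N) TP h | h <- iota 0 (size TP) & odd h].

End OnPath.
End Network.

(* alpha(k) from the list l = [alpha(0); ...; alpha(k-1)] *)
Definition alpha_next (l : seq rat) (k : nat) : rat :=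
  if k == 1%N then 1%R
  else (2%:R^-1 * \big[Num.max/0%R]_(i < k) \big[Num.max/0%R]_(j < k
          | [&& (0 < i)%N, (i <= j)%N & (i + j <= k)%N])
          (1 + nth 0 l i + nth 0 l j))%R.

(* [alpha(0); ...; alpha(n)] ; alpha(0) := 0 is a dummy value *)
Fixpoint alpha_list (n : nat) : seq rat :=
  if n is n'.+1 then let l := alpha_list n' in rcons l (alpha_next l n)
  else [:: 0%R].

Definition alpha (k : nat) : rat := nth 0%R (alpha_list k) k.

(* Main.v *)
Require Import Defs.
From mathcomp Require Import all_boot all_order all_algebra.
From mathcomp Require Import zify ring lra.
From Stdlib Require Import Classical ClassicalEpsilon.
Set Implicit Arguments. Unset Strict Implicit. Unset Printing Implicit Defensive.
Import Order.TTheory GRing.Theory Num.Theory.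

Section Part1.

Lemma size_alpha_list n : size (alpha_list n) = n.+1.
Proof. by elim: n => [|n IH] //=; rewrite size_rcons IH. Qed.

Lemma nth_alpha_list n i : (i <= n)%N -> nth 0%R (alpha_list n) i = alpha i.
Proof.
elim: n => [|n IH]; first by rewrite leqn0 => /eqP ->.
rewrite leq_eqVlt => /orP [/eqP -> //| Hi].
by rewrite /= nth_rcons size_alpha_list Hi IH.
Qed.

Lemma alphaS n : alpha n.+1 = alpha_next (alpha_list n) n.+1.
Proof. by rewrite /alpha /= nth_rcons size_alpha_list ltnn eqxx. Qed.

Local Open Scope ring_scope.

Lemma alpha_next_ge (n a b : nat) : (1 <= a)%N -> (a <= b)%N -> (a + b <= n.+1)%N ->
  2%:R^-1 * (1 + alpha a + alpha b) <= alpha n.+1.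
Proof.
move=> a1 ab abn.
have hn : n.+1 != 1%N by apply/eqP => h; move: abn; rewrite h; lia.
rewrite alphaS /alpha_next (negbTE hn).
have ha : (a < n.+1)%N by lia.
have hb : (b < n.+1)%N by lia.
rewrite -(nth_alpha_list (_ : a <= n)%N); last by lia.
rewrite -(nth_alpha_list (_ : b <= n)%N); last by lia.
apply: ler_wpM2l; first by [].
apply: le_trans; last first.
  exact: (le_bigmax _ _ (Ordinal ha)).
rewrite /=.
apply: le_trans; last first.
  apply: (@le_bigmax_cond _ _ _ _ (Ordinal hb)) => /=.
  by rewrite a1 ab abn.
by [].
Qed.

Lemma alpha_ge1 n : (1 <= n)%N -> 1 <= alpha n.
Proof.
elim/ltn_ind: n => n IH n1.
case: n IH n1 => [//|[|n]] IH _; first by [].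
have := @alpha_next_ge n.+1 1 1 isT isT isT.
have h1 : alpha 1 = 1 by [].
rewrite h1 => h. apply: le_trans h. lra.
Qed.

Lemma alpha_comb (n a b : nat) : (1 <= a)%N -> (1 <= b)%N -> (a + b <= n)%N ->
  1 + alpha a + alpha b <= 2 * alpha n.
Proof.
move=> a1 b1 abn.
case: n abn => [|n] abn; first lia.
wlog ab : a b a1 b1 abn / (a <= b)%N.
  move=> H; case: (leqP a b) => h; first exact: H.
  rewrite -addrA (addrC (alpha a)) addrA. apply: H => //; lia.
have := alpha_next_ge a1 ab abn. lra.
Qed.

End Part1.


Section Pos.
Variables (A : finType) (toll : pred A).

Lemma tpos_cons a Q : tpos toll (a :: Q) =
  if toll a then 0%N :: map succn (tpos toll Q) else map succn (tpos toll Q).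
Proof.
rewrite /tpos /= -(addn0 1%N) iotaDl filter_map.
have -> : [seq i <- iota 0 (size Q) | preim (addn 1) (nth false (toll a :: map toll Q)) i]
   = [seq i <- iota 0 (size Q) | nth false (map toll Q) i].
  by apply: eq_filter => i /=.
by case: (toll a).
Qed.

Lemma size_tpos Q : size (tpos toll Q) = count toll Q.
Proof.
elim: Q => [|a Q IH] //; rewrite tpos_cons /=; case: (toll a) => /=;
by rewrite size_map IH.
Qed.

Lemma tpos_props Q k : (k < count toll Q)%N ->
  let p := nth 0%N (tpos toll Q) k in
  [/\ (p < size Q)%N, forall x0, nth x0 Q p = nth x0 (filter toll Q) k &
      count toll (take p Q) = k].
Proof.
elim: Q k => [|a Q IH] k //=.
rewrite tpos_cons; case ha: (toll a) => /= hk.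
- case: k hk => [|k] hk /=; first by split => //; rewrite ha.
  have hk' : (k < count toll Q)%N by lia.
  rewrite (nth_map 0%N); last by rewrite size_tpos.
  have [h1 h2 h4] := IH k hk'.
  by split => //=; rewrite ha h4.
- have hk' : (k < count toll Q)%N by lia.
  rewrite (nth_map 0%N); last by rewrite size_tpos.
  have [h1 h2 h4] := IH k hk'.
  by split => //=; rewrite ha h4.
Qed.

Lemma tpos_toll Q k x0 : (k < count toll Q)%N ->
  toll (nth x0 Q (nth 0%N (tpos toll Q) k)).
Proof.
move=> hk; have [_ h2 _] := tpos_props hk; rewrite h2.
have hs : (k < size (filter toll Q))%N by rewrite size_filter.
by have := mem_nth x0 hs; rewrite mem_filter => /andP [].
Qed.

Lemma tpos_sorted Q : sorted ltn (tpos toll Q).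
Proof. by apply: sorted_filter; [exact: ltn_trans | exact: iota_ltn_sorted]. Qed.

Lemma tpos_lt Q k k' : (k < k')%N -> (k' < count toll Q)%N ->
  (nth 0%N (tpos toll Q) k < nth 0%N (tpos toll Q) k')%N.
Proof.
move=> kk' hk'.
apply: (sorted_ltn_nth ltn_trans 0%N (tpos_sorted Q)) => //; rewrite inE size_tpos //; lia.
Qed.
End Pos.


Section Walks.
Variables (V A : finType) (src tgt : A -> V).

Lemma walk_cat x y Q1 Q2 :
  walk src tgt x y (Q1 ++ Q2) =
  walk src tgt x (last x (map tgt Q1)) Q1 && walk src tgt (last x (map tgt Q1)) y Q2.
Proof.
elim: Q1 x => [|a Q1 IH] x /=; first by rewrite eqxx.
by rewrite IH andbA.
Qed.

Lemma walk_last x y Q : walk src tgt x y Q -> y = last x (map tgt Q).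
Proof. by elim: Q x => [|a Q IH] x /=; [move/eqP | case/andP => _ /IH]. Qed.

Lemma last_take (T : Type) (x : T) l a : (a <= size l)%N ->
  last x (take a l) = nth x (x :: l) a.
Proof.
elim: l x a => [|b l IH] x [|a] //= h.
rewrite IH //; case: a h => //= a h; apply: set_nth_default; lia.
Qed.

Lemma walk_src x y Q p x0 : walk src tgt x y Q -> (p < size Q)%N ->
  src (nth x0 Q p) = nth x (x :: map tgt Q) p.
Proof.
elim: Q x p => [|a Q IH] x [|p] //=; first by case/andP => /eqP ->.
case/andP => _ hw hp; have hp' : (p < size Q)%N by lia.
rewrite (IH _ p hw hp').
apply: set_nth_default => /=; rewrite size_map; lia.
Qed.

Lemma walk_seg x y Q a b : walk src tgt x y Q -> (a <= b)%N -> (b <= size Q)%N ->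
  walk src tgt (nth x (x :: map tgt Q) a) (nth x (x :: map tgt Q) b)
       (drop a (take b Q)).
Proof.
move=> hw hab hb.
move: hw; rewrite -{1}(cat_take_drop b Q) walk_cat => /andP [hw _].
move: hw; rewrite -[X in walk _ _ _ _ X](cat_take_drop a (take b Q)) walk_cat => /andP [_ hw].
move: hw; rewrite !map_take !last_take ?size_map ?size_take //; last by rewrite size_map; case: ifP => _; lia.
case: a hab => [|a] //= hab; rewrite nth_take //.
Qed.

Lemma uniq_seg x (l : seq V) a b : uniq (x :: l) -> (a <= b)%N -> (b <= size l)%N ->
  uniq (nth x (x :: l) a :: drop a (take b l)).
Proof.
move=> hu hab hb.
have -> : nth x (x :: l) a :: drop a (take b l) = drop a (take b.+1 (x :: l)).
  rewrite [RHS](drop_nth x); last by rewrite size_take /=; case: ifP => _; lia.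
  rewrite /=; congr cons.
  case: a hab => [|a] //= hab; rewrite nth_take //.
by apply: drop_uniq; apply: take_uniq.
Qed.
End Walks.


Section OnP.
Variables (V A : finType) (src tgt : A -> V) (toll : pred A) (w : A -> nat)
  (s t : V) (P : seq A).

Local Notation m := (mP toll P).
Local Notation pos k := (nth 0%N (tpos toll P) k).
Definition seg x y := drop x (take y P).
Local Notation N x := (count toll (take x P)).

Lemma mP_count : m = count toll P.
Proof. by rewrite /mP /taus size_filter. Qed.

Lemma before_last : before toll P m.+1 = size P.
Proof. by rewrite /before nth_default // size_tpos mP_count. Qed.

Lemma pos_lt k : (k < m)%N -> (pos k < size P)%N.
Proof. by rewrite mP_count => h; have [] := tpos_props h. Qed.

Lemma before_pos k : (k < m)%N -> before toll P k.+1 = pos k.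
Proof. by move=> h; rewrite /before; apply: set_nth_default; rewrite size_tpos -mP_count. Qed.

Lemma upto_le a : (a <= m)%N -> (upto toll P a <= size P)%N.
Proof. by case: a => [|a] //= h; apply: pos_lt. Qed.

Lemma before_le b : (b <= m.+1)%N -> (before toll P b <= size P)%N.
Proof.
case: b => [|b] //= h.
case: (ltnP b m) => hb; first by rewrite -/(before toll P b.+1) before_pos //; apply: ltnW; apply: pos_lt.
have -> : b = m by lia.
by rewrite -/(before toll P m.+1) before_last.
Qed.

Lemma before_upto k a : (k <= a)%N -> (a <= m)%N ->
  (before toll P k <= upto toll P a)%N.
Proof.
case: k => [|k] //; case: a => [|a] //= h1 h2.
rewrite -/(before toll P k.+1) before_pos; last by lia.
case: (ltnP k a) => h; last by have -> : k = a by lia.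
have := tpos_lt h (_ : (a < count toll P)%N). rewrite -mP_count; lia.
Qed.

Lemma upto_before a b : (a < b)%N -> (b <= m.+1)%N ->
  (upto toll P a <= before toll P b)%N.
Proof.
move=> hab hb.
case: (ltnP b m.+1) => hb'; last first.
  have -> : b = m.+1 by lia.
  by rewrite before_last upto_le //; lia.
case: a hab => [|a] //; case: b hb hb' => [|b] //= _ hb' hab.
rewrite -/(before toll P b.+1) before_pos; last by lia.
have := tpos_lt (_ : (a < b)%N) (_ : (b < count toll P)%N). rewrite -mP_count; lia.
Qed.

Lemma N_upto a : (a <= m)%N -> N (upto toll P a) = a.
Proof.
case: a => [|a] /=; first by rewrite take0.
rewrite mP_count => h.
have [h1 _ h3] := tpos_props h.
have [x0 _] : exists x0 : A, True.
  by case: P h1 => [|x0 ?] //; exists x0.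
rewrite (take_nth x0) // -cats1 count_cat h3 /=.
by rewrite (tpos_toll x0 h) addn0 addn1.
Qed.

Lemma N_before b : (1 <= b)%N -> (b <= m.+1)%N -> N (before toll P b) = b.-1.
Proof.
case: b => [|b] //= _ hb.
case: (ltnP b m) => h.
  rewrite -/(before toll P b.+1) before_pos //.
  have hb2 : (b < count toll P)%N by rewrite -mP_count.
  by have [_ _ h3] := tpos_props hb2.
have -> : b = m by lia.
by rewrite -/(before toll P m.+1) before_last take_size mP_count.
Qed.

Lemma drop_catl (T : Type) x (s1 s2 : seq T) : (x <= size s1)%N ->
  drop x (s1 ++ s2) = drop x s1 ++ s2.
Proof.
elim: s1 x => [|a s1 IH] x /=; first by case: x => // _; rewrite drop0.
case: x => [|x] h; first by rewrite !drop0.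
by rewrite /= IH.
Qed.

Lemma seg_cat x y z : (x <= y)%N -> (y <= z)%N -> seg x z = seg x y ++ seg y z.
Proof.
move=> hxy hyz; rewrite /seg.
rewrite -{1}(cat_take_drop y (take z P)) take_takel //.
case: (leqP x (size (take y P))) => hx; first by rewrite drop_catl.
move: hx; rewrite size_take; case: ifP => h1 h2; first lia.
have h1' : (size P <= y)%N by rewrite leqNgt h1.
rewrite !drop_oversize // ?cats0 ?size_take; by case: ltnP => hh; lia.
Qed.

Lemma count_seg x y : (x <= y)%N -> count toll (seg x y) = N y - N x.
Proof.
move=> h; rewrite /seg -[in RHS](cat_take_drop x (take y P)) take_takel // count_cat; lia.
Qed.

Lemma cost_seg_cat x y z : (x <= y)%N -> (y <= z)%N ->
  cost w (seg x z) = cost w (seg x y) + cost w (seg y z).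
Proof. by move=> h1 h2; rewrite (seg_cat h1 h2) /cost big_cat. Qed.

Lemma seg_unit k x0 : (k < m)%N ->
  seg (before toll P k.+1) (upto toll P k.+1) = [:: nth x0 P (pos k)].
Proof.
move=> h; rewrite /seg -/(before toll P k.+1) before_pos // /= (take_nth x0); last exact: pos_lt.
rewrite -cats1 drop_catl; last by rewrite size_take (pos_lt h).
by rewrite drop_oversize // size_take (pos_lt h).
Qed.

Lemma ctau_nth k x0 : (k < m)%N -> ctau toll w P k.+1 = w (nth x0 P (pos k)).
Proof.
move=> h; rewrite /ctau (nth_map x0) //.
have hck : (k < count toll P)%N by rewrite -mP_count.
have [_ h2 _] := tpos_props hck.
by rewrite h2.
Qed.

Hypothesis hP : spath src tgt s t P.
Definition vtx x := nth s (s :: map tgt P) x.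

Lemma vtx_upto a : (a <= m)%N -> vtx (upto toll P a) = TERM tgt toll s P a.
Proof.
case: a => [|a] //= h; rewrite /vtx /=.
have hca : (a < count toll P)%N by rewrite -mP_count.
have [h1 h2 _] := tpos_props hca.
have [x0 _] : exists x0 : A, True by case: P h1 => [|x0 ?] //; exists x0.
by rewrite (nth_map x0) // h2 (nth_map x0).
Qed.

Lemma vtx_before b : (1 <= b)%N -> (b <= m.+1)%N ->
  vtx (before toll P b) = INIT src toll t P b.
Proof.
case: b => [|b] //= _ hb.
move: hP => /andP [hw _].
case: (ltnP b m) => h.
  have hcb : (b < count toll P)%N by rewrite -mP_count.
have [h1 h2 _] := tpos_props hcb.
  have [x0 _] : exists x0 : A, True by case: P h1 => [|x0 ?] //; exists x0.
  rewrite -/(before toll P b.+1) before_pos // /vtx -(walk_src x0 hw h1) h2 (nth_map x0) //.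
have -> : b = m by lia.
rewrite -/(before toll P m.+1) before_last /INIT nth_default; last by rewrite size_map.
rewrite /vtx (walk_last hw).
case: (P) => [|a l] //=. by rewrite (last_nth s) /= size_map.
Qed.
End OnP.


Lemma nat_min (Q : nat -> Prop) n : Q n -> exists n0, Q n0 /\ forall k, Q k -> (n0 <= k)%N.
Proof.
elim/ltn_ind: n => n IH hn.
case: (classic (exists k, (k < n)%N /\ Q k)) => [[k [hk hQ]]|hno].
  exact: IH hk hQ.
exists n; split => // k hk; rewrite leqNgt; apply/negP => hkn.
by apply: hno; exists k.
Qed.

Section Dist.
Variables (V A : finType) (src tgt : A -> V) (toll : pred A) (w : A -> nat).

Lemma tf_dist_spec x y p : spath src tgt x y p -> toll_free toll p ->
  is_tf_dist src tgt toll w x y (tf_dist src tgt toll w x y).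
Proof.
move=> hp ht.
have [n0 [[q [h1 h2 h3]] hmin]] := @nat_min
  (fun n => exists q, [/\ spath src tgt x y q, toll_free toll q & cost w q = n]) _
  (ex_intro _ p (And3 hp ht erefl)).
rewrite /tf_dist; apply: epsilon_spec.
exists n0; split; first by exists q.
move=> q' hq' ht'; apply: hmin; by exists q'.
Qed.
End Dist.

Section OnP2.
Variables (V A : finType) (src tgt : A -> V) (toll : pred A) (w : A -> nat)
  (s t : V) (P : seq A).
Hypothesis hP : spath src tgt s t P.

Local Notation m := (mP toll P).
Local Notation pos k := (nth 0%N (tpos toll P) k).
Local Notation seg := (seg P).

Lemma seg_spath a b : (a < b)%N -> (b <= m.+1)%N ->
  spath src tgt (TERM tgt toll s P a) (INIT src toll t P b)
     (seg (upto toll P a) (before toll P b)).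
Proof.
move=> hab hb.
have hab' := upto_before hab hb.
have hbs := before_le hb.
rewrite -vtx_upto; last by lia.
rewrite -(vtx_before hP); try lia.
move: hP => /andP [hw hu].
apply/andP; split; first exact: walk_seg hw hab' hbs.
rewrite /seg map_drop map_take; apply: uniq_seg => //; by rewrite size_map.
Qed.

Lemma seg_tf l : (l <= m)%N -> toll_free toll (seg (upto toll P l) (before toll P l.+1)).
Proof.
move=> hl.
have h := count_seg toll P (upto_before (ltnSn l) (_ : l.+1 <= m.+1)%N).
rewrite N_upto // N_before // subnn in h.
rewrite /toll_free all_predC has_count h //.
Qed.

Lemma U_le_seg l : (l <= m)%N ->
  (U src tgt toll w s t P l l.+1 <= cost w (seg (upto toll P l) (before toll P l.+1)))%N.
Proof.
move=> hl.
have hs := seg_spath (ltnSn l) (_ : l.+1 <= m.+1)%N.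
have ht := seg_tf hl.
have [_ H] := tf_dist_spec w (hs hl) ht.
exact: H (hs hl) ht.
Qed.

Lemma cost1 (x : A) : cost w [:: x] = w x.
Proof. by rewrite /cost big_seq1. Qed.

Lemma LL_le_seg a b : (a < b)%N -> (b <= m.+1)%N ->
  (LL src tgt toll w s t P a b <= cost w (seg (upto toll P a) (before toll P b)))%N.
Proof.
move=> hab; have [d ->] : exists d, b = (a + d.+1)%N by exists (b - a).-1; lia.
elim: d a {hab} => [|d IH] a hb.
  rewrite /LL addn1 big_nat1 big_geq // addn0; apply: U_le_seg; lia.
have ha : (a < m)%N by lia.
have [x0 _] : exists x0 : A, True.
  by have := pos_lt ha; case: (P) => [|x0 ?] //; exists x0.
rewrite /LL (@big_ltn _ _ _ a); last by lia.
rewrite (@big_ltn _ _ _ a.+1 _ (ctau toll w P)); last by lia.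
rewrite -/(LL src tgt toll w s t P a.+1 (a + d.+2)).
have e1 : (a + d.+2 = a.+1 + d.+1)%N by lia.
rewrite (cost_seg_cat w P (upto_before (ltnSn a) (_ : a.+1 <= m.+1)%N) (_ : before toll P a.+1 <= before toll P (a + d.+2))%N); last 2 first.
- by lia.
- apply: (@leq_trans (upto toll P a.+1)); first by apply: before_upto; lia.
  by apply: upto_before; lia.
rewrite (cost_seg_cat w P (_ : before toll P a.+1 <= upto toll P a.+1)%N (_ : upto toll P a.+1 <= before toll P (a + d.+2))%N); last 2 first.
- by apply: before_upto; lia.
- by apply: upto_before; lia.
rewrite (seg_unit x0 ha) cost1 -(ctau_nth w x0 ha).
have h1 := U_le_seg (_ : a <= m)%N.
have h2 := IH a.+1; rewrite -e1 in h2.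
have := h1 (ltnW ha); have := h2 (_ : (a + d.+2 <= m.+1)%N).
rewrite /LL. lia.
Qed.

End OnP2.


Lemma foldl_pres (T : eqType) (Q : T -> Prop) (c : T -> T -> bool) b (l : seq T) :
  Q b -> (forall p, p \in l -> Q p) ->
  Q (foldl (fun b p => if c p b then p else b) b l).
Proof.
elim: l b => [|a l IH] b //= hb hl.
apply: IH; last by move=> p hp; apply: hl; rewrite inE hp orbT.
by case: ifP => _ //; apply: hl; rewrite inE eqxx.
Qed.

Definition Sx (ts : seq int) x : int := (\sum_(0 <= y < x) nth 0 ts y)%R.
Definition gp (prs : seq (nat * nat)) l := nth (0%N, 0%N) prs l.-1.

Section MR.
Variables (V A : finType) (src tgt : A -> V) (toll : pred A) (w : A -> nat)
  (s t : V) (P : seq A).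
Local Notation m := (mP toll P).
Local Notation Uf := (Ufin src tgt toll s t P).
Local Notation UU := (U src tgt toll w s t P).
Local Notation LLL := (LL src tgt toll w s t P).
Definition Dp (p : nat * nat) : int := ((UU p.1 p.2)%:Z - (LLL p.1 p.2)%:Z)%R.

Hypothesis hst : Uf 0 m.+1.

Lemma mr_best_props ts k : (0 < k)%N -> (k < m.+1)%N ->
  let p := mr_best src tgt toll w s t P ts k in
  [/\ (p.1 < k)%N, (k < p.2)%N, (p.2 <= m.+1)%N & Uf p.1 p.2].
Proof.
move=> h0 h1; rewrite /mr_best.
apply: (@foldl_pres _ (fun p => [/\ (p.1 < k)%N, (k < p.2)%N, (p.2 <= m.+1)%N & Uf p.1 p.2])).
  by split.
move=> p.
rewrite mem_filter => /andP [hu /allpairsP [[i j] [/= hi hj e]]].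
rewrite e /= in hu *.
move: hi hj; rewrite !mem_iota /= => hi /andP [hj1 hj2].
split => //; lia.
Qed.

Definition inv k ts prs :=
  [/\ (1 <= k <= m.+1)%N, size ts = k.-1, size prs = k.-1,
   forall l, (1 <= l < k)%N -> let p := gp prs l in
     [/\ (p.1 < l)%N, (l < p.2)%N, (p.2 <= k)%N, Uf p.1 p.2 & Sx ts l = (Sx ts p.1 + Dp p)%R]
   & forall x y, (1 <= x)%N -> (x <= y < k)%N -> ((gp prs x).2 <= y)%N \/ gp prs x = gp prs y].

Lemma Sx_cat ts r x : (x <= size ts)%N -> Sx (ts ++ r) x = Sx ts x.
Proof.
move=> h; apply: eq_big_nat => y hy; rewrite nth_cat; case: ifP => // hh; move/andP: hy => [_ hy]; move/negbT: hh; rewrite -leqNgt => hh; by have := leq_trans hy h; rewrite ltnNge hh.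
Qed.

Lemma inv_step k ts prs : inv k ts prs -> (k < m.+1)%N ->
  let p := mr_best src tgt toll w s t P ts k in
  let tk := mr_val src tgt toll w s t P ts k p in
  inv p.2 (ts ++ tk :: nseq (p.2 - k.+1) 0%R) (prs ++ nseq (p.2 - k) p).
Proof.
case=> hk hts hprs hl hxy hkm p tk.
have hk0 : (0 < k)%N by lia.
have [hp1 hp2 hp3 hpu] := mr_best_props ts hk0 hkm.
rewrite -/p in hp1 hp2 hp3 hpu.
set ts' := ts ++ _; set prs' := prs ++ _.
have gold l : (1 <= l < k)%N -> gp prs' l = gp prs l.
  by move=> h; rewrite /gp nth_cat hprs; case: ifP => // hh; exfalso; lia.
have gnew l : (k <= l < p.2)%N -> gp prs' l = p.
  move=> h; rewrite /gp nth_cat hprs; case: ifP => hh; first (exfalso; lia).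
  rewrite nth_nseq; case: ifP => // hh'; exfalso; lia.
have Sold x : (x <= k.-1)%N -> Sx ts' x = Sx ts x.
  by move=> h; apply: Sx_cat; rewrite hts.
have Snew l : (k <= l < p.2)%N -> Sx ts' l = (Sx ts p.1 + Dp p)%R.
  move=> h.
  rewrite /Sx (@big_cat_nat _ _ _ k 0 l) //=; last by lia.
  rewrite [X in (_ + X)%R]big1_seq ?addr0; last first.
    move=> y; rewrite mem_index_iota => hy; move: y hy => /= y hy; rewrite /ts' nth_cat hts.
    case: ifP => hh; first (exfalso; lia).
    case e: (y - k.-1)%N => [|z]; first lia.
    rewrite /= nth_nseq; by case: ifP.
  have -> : k = (k.-1).+1 by lia.
  rewrite big_nat_recr //= -/(Sx ts' k.-1) Sold // /ts' nth_cat hts ltnn subnn /=.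
  rewrite /tk /mr_val -/p /Dp.
  have -> : Sx ts k.-1 = (Sx ts p.1 + \sum_(p.1 <= l0 < k.-1) nth 0 ts l0)%R.
    by rewrite /Sx (@big_cat_nat _ _ _ p.1 0 k.-1) //; lia.
  rewrite /Sx; ring.
split.
- by lia.
- by rewrite size_cat /= size_nseq hts; lia.
- by rewrite size_cat size_nseq hprs; lia.
- move=> l hl'.
  case: (ltnP l k) => hlk.
    have hlk' : (1 <= l < k)%N by lia.
    rewrite gold //.
    have [h1 h2 h3 h4 h5] := hl l hlk'.
    split => //; first by lia.
    by rewrite !Sold ?h5 //; lia.
  have hn : (k <= l < p.2)%N by lia.
  rewrite gnew //; split => //; try lia.
  by rewrite Snew // Sold //; lia.
- move=> x y hx hxy'.
  case: (ltnP y k) => hyk.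
    rewrite !gold //; try lia; apply: hxy => //; lia.
  case: (ltnP x k) => hxk.
    left; rewrite gold; last lia.
    have hx' : (1 <= x < k)%N by lia.
    have [_ _ h3 _ _] := hl x hx'.
    lia.
  by right; rewrite !gnew //; lia.
Qed.

Lemma inv_loop fuel k ts prs : inv k ts prs -> (m.+2 <= fuel + k)%N ->
  inv m.+1 (mr_loop src tgt toll w s t P fuel k ts prs).1
           (mr_loop src tgt toll w s t P fuel k ts prs).2.
Proof.
elim: fuel k ts prs => [|f IH] k ts prs hinv hf.
  by case: hinv => hk; lia.
rewrite /=; case: ifP => hk.
  apply: IH; first exact: inv_step.
  case: hinv => hk' *.
  have hk0 : (0 < k)%N by lia.
  have := mr_best_props ts hk0 hk.
  case => //; lia.
have -> : m.+1 = k by case: hinv => *; lia.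
by [].
Qed.

Lemma inv_final : inv m.+1 (tolls src tgt toll w s t P) (mr_pairs src tgt toll w s t P).
Proof.
apply: inv_loop; last by lia.
by split => //; lia.
Qed.
End MR.


Section TPs.
Variables (V A : finType) (src tgt : A -> V) (toll : pred A) (w : A -> nat)
  (s t : V) (P : seq A).
Local Notation m := (mP toll P).
Local Notation Uf := (Ufin src tgt toll s t P).
Local Notation g := (gp (mr_pairs src tgt toll w s t P)).
Local Notation S := (Sx (tolls src tgt toll w s t P)).
Local Notation D := (Dp src tgt toll w s t P).
Local Notation d := (0%N, 0%N).

Hypothesis hst : Uf 0 m.+1.

Lemma F1 l : (1 <= l <= m)%N ->
  [/\ ((g l).1 < l)%N, (l < (g l).2)%N, ((g l).2 <= m.+1)%N, Uf (g l).1 (g l).2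
    & S l = (S (g l).1 + D (g l))%R].
Proof.
move=> hl; have [_ _ _ H _] := inv_final w hst.
by apply: H; lia.
Qed.

Lemma F2 l : (1 <= l <= m)%N -> (1 <= (g l).1)%N -> ((g (g l).1).2 <= l)%N.
Proof.
move=> hl hi.
have [_ _ _ _ H] := inv_final w hst.
have [h1 _ _ _ _] := F1 hl.
have hi' : (1 <= (g l).1 <= m)%N by lia.
have [h1' _ _ _ _] := F1 hi'.
have hxy : ((g l).1 <= l < m.+1)%N by lia.
case: (H (g l).1 l hi hxy) => // e.
by move: h1'; rewrite e; lia.
Qed.

Lemma nth_rcons_sz T (x0 x : T) sq : nth x0 (rcons sq x) (size sq) = x.
Proof. by rewrite nth_rcons ltnn eqxx. Qed.
Lemma nth_rcons_lt T (x0 x : T) sq n : (n < size sq)%N -> nth x0 (rcons sq x) n = nth x0 sq n.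
Proof. by move=> h; rewrite nth_rcons h. Qed.

Definition tpinv l (L : seq (nat * nat)) :=
  [/\ (0 < size L)%N, (nth d L 0).1 = 0%N, nth d L (size L).-1 = g l,
   (forall h, (h.+1 < size L)%N ->
      [/\ ((nth d L h.+1).1 < (nth d L h).2)%N, ((nth d L h).2 <= l)%N,
         (1 <= (nth d L h.+1).1)%N & (h.+2 < size L -> (nth d L h).2 <= (nth d L h.+2).1)%N])
   & (forall h, (h < size L)%N ->
      [/\ ((nth d L h).1 < (nth d L h).2)%N, ((nth d L h).2 <= m.+1)%N & Uf (nth d L h).1 (nth d L h).2])
     /\ (\sum_(0 <= h < size L) D (nth d L h))%R = S l].

Lemma tp_loop0 f : tp_loop src tgt toll w s t P f 0 = [::].
Proof. by case: f. Qed.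

Lemma tpinv_loop f l : (1 <= l <= m)%N -> (l < f)%N ->
  tpinv l (tp_loop src tgt toll w s t P f l).
Proof.
elim: f l => [|f IH] l hl hf; first lia.
case: l hl hf => [|l] hl hf; first lia.
rewrite /= -/(gp _ l.+1).
have [h1 h2 h3 h4 h5] := F1 hl.
case hi: (g l.+1).1 => [|i].
  rewrite tp_loop0 /=.
  split => //.
  split; first by case => //= _; split => //; lia.
  by rewrite big_nat1 h5 hi /Sx big_geq //= add0r.
set L0 := tp_loop _ _ _ _ _ _ _ _ _.
have hi1 : (1 <= i.+1 <= m)%N by lia.
have hf' : (i.+1 < f)%N by lia.
have [k1 k2 k3 k4 [k5 k6]] := IH i.+1 hi1 hf'.
rewrite -/L0 in k1 k2 k3 k4 k5 k6. rewrite -hi in hi1 k3 k4 k6 * .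
have hg2 : ((g (g l.+1).1).2 <= l.+1)%N by apply: F2 => //; lia.
have [j1 j2 j3 j4 j5] := F1 hi1.
set x := g l.+1 in h1 h2 h3 h4 h5 hi1 k3 k4 k6 hg2 j1 j2 j3 j4 j5 *.
split.
- by rewrite size_rcons.
- by rewrite nth_rcons_lt.
- by rewrite size_rcons /= nth_rcons_sz.
- move=> h; rewrite size_rcons ltnS => hh.
  case: (ltngtP h.+1 (size L0)) => hA; last 2 first.
  + lia.
  + rewrite hA nth_rcons_sz nth_rcons_lt; last by lia.
    have -> : nth d L0 h = g x.1 by rewrite -k3; congr nth; lia.
    split => //; lia.
  + have [a1 a2 a3 a4] := k4 h hA.
    have hA2 : (h < size L0)%N by lia.
    rewrite [nth d (rcons L0 x) h.+1]nth_rcons_lt // [nth d (rcons L0 x) h]nth_rcons_lt //.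
    split => //; first by lia.
    move=> hB; case: (ltngtP h.+2 (size L0)) => hC.
    * by rewrite nth_rcons_lt //; apply: a4.
    * lia.
    * by rewrite hC nth_rcons_sz; lia.
- split.
  + move=> h; rewrite size_rcons ltnS => hh.
    case: (ltngtP h (size L0)) => hA.
    * by rewrite nth_rcons_lt //; exact: k5.
    * lia.
    * by rewrite hA nth_rcons_sz; split => //; lia.
  + rewrite size_rcons big_nat_recr //= nth_rcons_sz.
    rewrite (@eq_big_nat _ _ _ 0 (size L0) _ (fun h => D (nth d L0 h))); last first.
      by move=> h hh; rewrite nth_rcons_lt //; lia.
    by rewrite k6 h5.
Qed.
End TPs.


Section Build.
Variables (V A : finType) (src tgt : A -> V) (toll : pred A) (w : A -> nat)
  (s t : V) (P : seq A) (ups : nat -> nat -> seq A).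
Local Notation m := (mP toll P).
Local Notation Uf := (Ufin src tgt toll s t P).
Local Notation UU := (U src tgt toll w s t P).
Local Notation LLL := (LL src tgt toll w s t P).
Local Notation sg a b := (seg P (upto toll P a) (before toll P b)).

Hypothesis hP : spath src tgt s t P.
Hypothesis Hups : forall i j, (i < j <= m.+1)%N -> Uf i j ->
     [/\ spath src tgt (TERM tgt toll s P i) (INIT src toll t P j) (ups i j),
         toll_free toll (ups i j)
       & cost w (ups i j) = UU i j].

Fixpoint sdl (k : nat) (M : seq (nat * nat)) : Prop :=
  match M with
  | [::] => (k <= m.+1)%N
  | p :: M' => [/\ (k <= p.1)%N, (p.1 < p.2)%N, (p.2 <= m.+1)%N, Uf p.1 p.2 & sdl p.2 M']
  end.

Lemma sdl_le k k' M : sdl k M -> (k' <= k)%N -> sdl k' M.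
Proof. case: M => [|p M] /=; [lia | case=> *; split => //; lia]. Qed.

Lemma N_before' k : (k <= m.+1)%N -> count toll (take (before toll P k) P) = k.-1.
Proof. case: k => [|k] h; first by rewrite /= take0. by rewrite N_before. Qed.

Lemma cost_cat (a b : seq A) : cost w (a ++ b) = cost w a + cost w b.
Proof. by rewrite /cost big_cat. Qed.

Lemma build_cost k M : sdl k M ->
  (cost w (build toll P ups k M) + \sum_(p <- M) cost w (sg p.1 p.2) =
   cost w (seg P (before toll P k) (size P)) + \sum_(p <- M) UU p.1 p.2)%N.
Proof.
elim: M k => [|[a b] M IH] k /=.
  by move=> _; rewrite !big_nil /seg take_size.
case=> /= h1 h2 h3 h4 h5.
have hab : (a < b <= m.+1)%N by lia.
have [_ _ hc] := Hups hab h4.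
rewrite !big_cons /= !cost_cat hc.
have := IH b h5.
rewrite (cost_seg_cat w P (_ : before toll P k <= upto toll P a)%N
          (_ : upto toll P a <= size P)%N); last 2 first.
- by apply: before_upto; lia.
- by apply: upto_le; lia.
rewrite (cost_seg_cat w P (_ : upto toll P a <= before toll P b)%N
          (_ : before toll P b <= size P)%N); last 2 first.
- by apply: upto_before; lia.
- by apply: before_le; lia.
rewrite /seg; lia.
Qed.

Lemma build_count k M : sdl k M ->
  (count toll (build toll P ups k M) + \sum_(p <- M) (p.2 - 1 - p.1) = m - k.-1)%N.
Proof.
elim: M k => [|[a b] M IH] k /=.
  move=> hk; rewrite big_nil addn0.
  have e : drop (before toll P k) P = seg P (before toll P k) (size P) by rewrite /seg take_size.
  rewrite e count_seg; last by apply: before_le.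
  by rewrite take_size N_before' // mP_count.
case=> /= h1 h2 h3 h4 h5.
have hab : (a < b <= m.+1)%N by lia.
have [_ ht _] := Hups hab h4.
have hc0 : count toll (ups a b) = 0%N.
  by apply/eqP; rewrite -leqn0 leqNgt -has_count -all_predC.
rewrite big_cons /= !count_cat hc0.
have := IH b h5.
rewrite -/(seg P (before toll P k) (upto toll P a)) count_seg; last by apply: before_upto; lia.
rewrite N_upto; last by lia.
rewrite N_before'; last by lia.
lia.
Qed.

Lemma sum_LL_le k M : sdl k M ->
  (\sum_(p <- M) LLL p.1 p.2 <= \sum_(p <- M) cost w (sg p.1 p.2))%N.
Proof.
elim: M k => [|[a b] M IH] k /=; first by rewrite !big_nil.
case=> /= h1 h2 h3 h4 h5.
rewrite !big_cons /=; apply: leq_add; last exact: IH h5.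
exact: LL_le_seg.
Qed.

Lemma sdl_bound k M hi : sdl k M -> (forall p, p \in M -> (p.2 <= hi)%N) -> (k <= hi)%N ->
  (\sum_(p <- M) (p.2 - 1 - p.1) + size M + k <= hi)%N.
Proof.
elim: M k => [|[a b] M IH] k /=; first by rewrite big_nil; lia.
case=> /= h1 h2 h3 h4 h5 hall hk.
have hb : (b <= hi)%N by have := hall (a, b); rewrite inE eqxx; apply.
have hall' : forall p, p \in M -> (p.2 <= hi)%N by move=> p hp; apply: hall; rewrite inE hp orbT.
have := IH b h5 hall' hb.
rewrite big_cons /=. lia.
Qed.
End Build.


Section Chain.
Variables (V A : finType) (src tgt : A -> V) (toll : pred A) (w : A -> nat)
  (s t : V) (P : seq A) (ups : nat -> nat -> seq A).
Local Notation m := (mP toll P).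
Local Notation Uf := (Ufin src tgt toll s t P).
Local Notation d := (0%N, 0%N).
Variable L : seq (nat * nat).
Local Notation q := (size L).
Local Notation Lh h := (nth d L h).
Hypothesis T1 : (Lh 0).1 = 0%N.
Hypothesis T2 : forall h, (h.+1 < q)%N ->
      [/\ ((Lh h.+1).1 < (Lh h).2)%N, ((Lh h).2 <= m)%N,
         (1 <= (Lh h.+1).1)%N & (h.+2 < q -> (Lh h).2 <= (Lh h.+2).1)%N].
Hypothesis T4 : forall h, (h < q)%N ->
      [/\ ((Lh h).1 < (Lh h).2)%N, ((Lh h).2 <= m.+1)%N & Uf (Lh h).1 (Lh h).2].

Lemma Lmono1 h : (h.+1 < q)%N -> ((Lh h).1 < (Lh h.+1).1)%N.
Proof.
case: h => [|h] hq.
  by have [_ _ h3 _] := T2 hq; rewrite T1.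
have hq' : (h.+1 < q)%N by lia.
have [a1 _ _ a4] := T2 hq'.
have := a4 hq; lia.
Qed.

Lemma Lmono h h' : (h <= h')%N -> (h' < q)%N -> ((Lh h).1 <= (Lh h').1)%N.
Proof.
move=> hh; have [k ->] : exists k, h' = (h + k)%N by exists (h' - h); lia.
elim: k => [|k IH]; first by rewrite addn0.
move=> hq; rewrite addnS in hq.
have := Lmono1 hq; have := IH (ltnW hq); rewrite addnS; lia.
Qed.

Lemma sdl_filter c r n k : (r + n <= q)%N -> (k <= m.+1)%N ->
  (forall h, (r <= h < r + n)%N -> odd h == c -> (k <= (Lh h).1)%N) ->
  sdl src tgt toll s t P k [seq Lh h | h <- iota r n & odd h == c].
Proof.
elim: n r k => [|n IH] r k hrn hk hyp; first by [].
rewrite /= ; case: ifP => hc /=.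
- have hr : (r < q)%N by lia.
  have [a1 a2 a3] := T4 hr.
  split => //; first by apply: hyp => //; lia.
  apply: IH => //; first by lia.
  move=> h hh hch.
  have h2 : (r.+2 <= h)%N.
    case: (ltnP (r.+1) h) => // hle.
    have : h = r.+1 by lia.
    move=> e; move: hch hc; rewrite e /= => /eqP <-. by case: (odd r).
  have hr2 : (r.+2 < q)%N by lia.
  have hr1 : (r.+1 < q)%N by lia.
  have [_ _ _ b4] := T2 hr1.
  have hhq : (h < q)%N by lia.
  have := b4 hr2.
  have := Lmono h2 hhq. lia.
- apply: IH => //; first by lia.
  move=> h hh hch; apply: hyp => //; lia.
Qed.
Lemma cover_chain : (0 < q)%N -> (Lh q.-1).2 = m.+1 ->
  (m <= \sum_(0 <= h < q) ((Lh h).2 - 1 - (Lh h).1))%N.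
Proof.
move=> hq hlast.
have claim : forall n, (n < q)%N -> ((Lh n).1 <= \sum_(0 <= h < n) ((Lh h).2 - 1 - (Lh h).1))%N.
  elim=> [|n IH] hn; first by rewrite T1.
  rewrite big_nat_recr //=.
  have hn' : (n < q)%N by lia.
  have := IH hn'.
  have [a1 _ _ _] := T2 hn.
  have [b1 _ _] := T4 hn'.
  lia.
have hq1 : (q.-1 < q)%N by lia.
have := claim _ hq1.
have -> : q = (q.-1).+1 by lia.
rewrite big_nat_recr //= -/(nth d L q.-1) hlast.
have [b1 _ _] := T4 hq1.
lia.
Qed.

Hypothesis hP : spath src tgt s t P.

Lemma mem_Lfilter c r n p : (r + n <= q)%N -> p \in [seq Lh h | h <- iota r n & odd h == c] ->
  (p.2 <= m.+1)%N.
Proof.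
move=> hrn /mapP [h]; rewrite mem_filter mem_iota => /andP [_ hh] ->.
have hq : (h < q)%N by lia.
by have [_ b2 _] := T4 hq.
Qed.

Lemma bound_even : (1 < q)%N ->
  (\sum_(p <- [seq Lh h | h <- iota 0 q & odd h == false]) (p.2 - 1 - p.1) <= m.-1)%N.
Proof.
move=> hq.
have hs := @sdl_filter false 0 q 0 (leqnn _) (leq0n _) (fun _ _ _ => leq0n _).
have [q' eq'] : exists q', q = q'.+2 by exists q.-2; lia.
have h2q : (2 + q' <= q)%N by lia.
rewrite eq' /= in hs *.
have [_ _ a3 _ hs'] := hs.
have h01 : (0.+1 < q)%N by lia.
have [_ a2 _ _] := T2 h01.
have hall : forall p, p \in [seq Lh h | h <- iota 2 q' & odd h == false] -> (p.2 <= m.+1)%N.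
  by move=> p hp; apply: (mem_Lfilter h2q hp).
have hb := sdl_bound hP hs' hall a3.
rewrite big_cons /= T1.
move: hb; case: [seq Lh h | h <- iota 2 q' & odd h == false] => [|p M].
  rewrite !big_nil /=; lia.
move=> hb'.
have : (\sum_(j <- p :: M) (j.2 - 1 - j.1) + (size M).+1 + (Lh 0).2 <= m.+1)%N := hb'.
have h0q : (0 < q)%N by lia.
have [b1 _ _] := T4 h0q.
lia.
Qed.

Lemma bound_odd : (1 < q)%N ->
  (\sum_(p <- [seq Lh h | h <- iota 0 q & odd h == true]) (p.2 - 1 - p.1) <= m.-1)%N.
Proof.
move=> hq.
have hyp : forall h, (0 <= h < 0 + q)%N -> odd h == true -> (1 <= (Lh h).1)%N.
  case=> [|h] // hh _.
  have hh' : (h.+1 < q)%N by lia.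
  by have [_ _ a3 _] := T2 hh'.
have hs := @sdl_filter true 0 q 1 (leqnn _) (_ : 1 <= m.+1)%N hyp.
have [q' eq'] : exists q', q = q'.+2 by exists q.-2; lia.
have h2q : (0 + q <= q)%N by lia.
have hall : forall p, p \in [seq Lh h | h <- iota 0 q & odd h == true] -> (p.2 <= m.+1)%N.
  by move=> p hp; apply: (mem_Lfilter h2q hp).
have hb := sdl_bound hP (hs _) hall (_ : 1 <= m.+1)%N.
move: hb; rewrite eq' /=.
case: [seq Lh h | h <- iota 2 q' & odd h == true] => [|p M]; rewrite ?big_cons ?big_nil /=; lia.
Qed.

End Chain.

Section Part10.
Local Open Scope ring_scope.

Lemma final_arith (a a1 a2 b b1 b2 v d1 d2 : rat) : 1 <= a -> 1 <= a1 -> 1 <= a2 ->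
  1 + a1 + a2 <= 2 * a -> 0 <= b -> v = d1 + d2 -> b - d1 <= b1 -> b - d2 <= b2 ->
  v < a^-1 * b -> a^-1 * b <= a1^-1 * b1 \/ a^-1 * b <= a2^-1 * b2.
Proof.
move=> ha ha1 ha2 hc hb hv h1 h2 hlt.
set r := a^-1 * b.
have hr : 0 <= r by rewrite /r mulr_ge0 // invr_ge0; lra.
have ea : a * r = b by rewrite /r mulrA mulrV ?mul1r // unitfE; apply/eqP => e; move: ha; rewrite e; lra.
case: (lerP r (a1^-1 * b1)) => c1; first by left.
case: (lerP r (a2^-1 * b2)) => c2; first by right.
exfalso.
have e1 : b1 = a1 * (a1^-1 * b1) by rewrite mulrA mulrV ?mul1r // unitfE; apply/eqP => e; move: ha1; rewrite e; lra.
have e2 : b2 = a2 * (a2^-1 * b2) by rewrite mulrA mulrV ?mul1r // unitfE; apply/eqP => e; move: ha2; rewrite e; lra.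
have l1 : a1 * (a1^-1 * b1) < a1 * r by rewrite ltr_pM2l //; lra.
have l2 : a2 * (a2^-1 * b2) < a2 * r by rewrite ltr_pM2l //; lra.
have hp : 0 <= r * (2 * a - 1 - a1 - a2) by rewrite mulr_ge0 //; lra.
rewrite -e1 in l1; rewrite -e2 in l2.
have hp' : 0 <= 2 * (a * r) - r - a1 * r - a2 * r.
  have -> : 2 * (a * r) - r - a1 * r - a2 * r = r * (2 * a - 1 - a1 - a2) by ring.
  exact: hp.
move: hp' l1 l2 ea hlt; rewrite -/r.
generalize (a * r) (a1 * r) (a2 * r) => x y z.
lra.
Qed.

End Part10.


Lemma sum_Posz (T : Type) (M : seq T) (F : T -> nat) :
  (\sum_(p <- M) (F p)%:Z)%R = (\sum_(p <- M) F p)%N.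
Proof.
elim: M => [|a M IH]; first by rewrite !big_nil.
by rewrite !big_cons IH PoszD.
Qed.

Lemma sum_split_odd (F : nat -> nat * nat) (G : nat * nat -> int) q :
  (\sum_(0 <= h < q) G (F h))%R =
  (\sum_(p <- [seq F h | h <- iota 0 q & odd h == false]) G p +
   \sum_(p <- [seq F h | h <- iota 0 q & odd h == true]) G p)%R.
Proof.
rewrite !big_map !big_filter /index_iota subn0 (bigID odd) /= addrC. 
by congr (_ + _)%R; apply: eq_bigl => h; case: (odd h).
Qed.

Lemma sum_split_odd_nat (F : nat -> nat * nat) (G : nat * nat -> nat) q :
  (\sum_(0 <= h < q) G (F h))%N =
  (\sum_(p <- [seq F h | h <- iota 0 q & odd h == false]) G p +
   \sum_(p <- [seq F h | h <- iota 0 q & odd h == true]) G p)%N.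
Proof.
rewrite !big_map !big_filter /index_iota subn0 (bigID odd) /= addnC.
congr (_ + _)%N; apply: eq_bigl => h; by case: (odd h).
Qed.

Theorem theorem6 (V A : finType) (src tgt : A -> V) (toll : pred A)
    (w : A -> nat) (s t : V) (P : seq A) (ups : nat -> nat -> seq A) :
  (* standing assumption: a toll-free s-t path exists *)
  tf_reach src tgt toll s t ->
  valid src tgt toll w s t P ->
  (* ups i j is a shortest toll-free path from TERM(tau_i) to INIT(tau_j) *)
  (forall i j, (i < j <= (mP toll P).+1)%N -> Ufin src tgt toll s t P i j ->
     [/\ spath src tgt (TERM tgt toll s P i) (INIT src toll t P j) (ups i j),
         toll_free toll (ups i j)
       & cost w (ups i j) = U src tgt toll w s t P i j]) ->
  ((VP src tgt toll w s t P)%:~R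
     < (alpha (mT toll P))^-1 * (Bp src tgt toll w s t P)%:~R)%R ->
  ((alpha (mT toll P))^-1 * (Bp src tgt toll w s t P)%:~R
     <= (alpha (mT toll (P1 src tgt toll w s t P ups)))^-1
        * (Bp src tgt toll w s t (P1 src tgt toll w s t P ups))%:~R)%R
  \/
  ((alpha (mT toll P))^-1 * (Bp src tgt toll w s t P)%:~R
     <= (alpha (mT toll (P2 src tgt toll w s t P ups)))^-1
        * (Bp src tgt toll w s t (P2 src tgt toll w s t P ups))%:~R)%R.
Proof.
move=> hreach hval Hups hlt.
have [hP hmT hmin] := hval.
have emT : mT toll P = mP toll P by rewrite /mT mP_count.
set m := mP toll P in Hups emT *.
have hm : (1 <= m)%N by rewrite -emT.
have hst' : Ufin src tgt toll s t P 0 m.+1.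
  by rewrite /Ufin /= /INIT nth_default // size_map.
have hmm : (1 <= m <= m)%N by rewrite hm leqnn.
have hinv := @tpinv_loop _ _ src tgt toll w s t P hst' m.+1 m hmm (ltnSn m).
rewrite -/(TP src tgt toll w s t P) in hinv.
set L := TP src tgt toll w s t P in hinv *.
have [k0 k1 k2 k3 [k4 k5]] := hinv.
have hlast : (nth (0%N, 0%N) L (size L).-1).2 = m.+1.
  rewrite k2; have [_ a2 a3 _ _] := F1 w hst' hmm; lia.
have [_ hsz _ _ _] := inv_final w hst'.
have hVP : VP src tgt toll w s t P = Sx (tolls src tgt toll w s t P) m.
  by rewrite /VP (big_nth 0%R) hsz.
have hB : (0 <= Bp src tgt toll w s t P)%R.
  have hu : (0 < m.+1 <= m.+1)%N by rewrite leqnn.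
  have [hu1 hu2 hu3] := Hups 0%N m.+1 hu hst'.
  have eI : INIT src toll t P m.+1 = t by rewrite /INIT nth_default // size_map.
  rewrite eI /= in hu1.
  have [[q [hq1 hq2 hq3]] _] := tf_dist_spec w hu1 hu2.
  have hall : all (fun a => ~~ toll a || (a \in P)) q.
    by apply: sub_all hq2 => a ha; rewrite /= ha.
  have hc := hmin q hq1 hall.
  rewrite /Bp /L_inf -hq3. lia.
have eP1 : P1 src tgt toll w s t P ups =
    build toll P ups 0 [seq nth (0%N, 0%N) L h | h <- iota 0 (size L) & odd h == false].
  rewrite /P1 -/L; congr build; congr map; apply: eq_filter => h; by case: (odd h).
have eP2 : P2 src tgt toll w s t P ups =
    build toll P ups 0 [seq nth (0%N, 0%N) L h | h <- iota 0 (size L) & odd h == true].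
  rewrite /P2 -/L; congr build; congr map; apply: eq_filter => h; by case: (odd h).
case: (ltnP 1 (size L)) => hq; last first.
  right; rewrite eP2 (_ : size L = 1%N); last by lia.
  by rewrite /= drop0.
have key : forall c : bool,
  let M := [seq nth (0%N, 0%N) L h | h <- iota 0 (size L) & odd h == c] in
   (Bp src tgt toll w s t P - \sum_(p <- M) Dp src tgt toll w s t P p
      <= Bp src tgt toll w s t (build toll P ups 0 M))%R /\
   (mT toll (build toll P ups 0 M) + \sum_(p <- M) (p.2 - 1 - p.1) = m)%N.
  move=> c M.
  have s0 : sdl src tgt toll s t P 0 M.
    by apply: (sdl_filter k1 k3 k4) => //.
  have hc0 := build_cost hP Hups s0.
  have hl0 := sum_LL_le w hP s0.
  have hn0 := build_count hP Hups s0.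
  have eP : seg P (before toll P 0) (size P) = P by rewrite /seg /= drop0 take_size.
  rewrite eP in hc0.
  split.
  - rewrite /Bp /Dp sumrB !sum_Posz. lia.
  - rewrite /mT; lia.
have [hb0 hn0] := key false.
have [hb1 hn1] := key true.
have hE0 := bound_even k1 k3 k4 hP hq.
have hE1 := bound_odd k1 k3 k4 hP hq.
have hcov := cover_chain k1 k3 k4 k0 hlast.
rewrite (sum_split_odd_nat (nth (0%N, 0%N) L) (fun p => p.2 - 1 - p.1)%N) in hcov.
rewrite (sum_split_odd (nth (0%N, 0%N) L)) in k5.
rewrite eP1 eP2 emT.
rewrite emT in hlt.
set M0 := [seq nth (0%N, 0%N) L h | h <- iota 0 (size L) & odd h == false] in hb0 hn0 hE0 hcov k5 *.
set M1 := [seq nth (0%N, 0%N) L h | h <- iota 0 (size L) & odd h == true] in hb1 hn1 hE1 hcov k5 *.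
set m1 := mT toll (build toll P ups 0 M0) in hn0 *.
set m2 := mT toll (build toll P ups 0 M1) in hn1 *.
set E0 := \sum_(p <- M0) (p.2 - 1 - p.1)%N in hn0 hE0 hcov.
set E1 := \sum_(p <- M1) (p.2 - 1 - p.1)%N in hn1 hE1 hcov.
have hm1 : (1 <= m1)%N by rewrite /m in hn0 hE0 *; lia.
have hm2 : (1 <= m2)%N by rewrite /m in hn1 hE1 *; lia.
have hm12 : (m1 + m2 <= m)%N by rewrite /m in hn0 hn1 hcov *; lia.
apply: (final_arith (v := (VP src tgt toll w s t P)%:~R) (d1 := (\sum_(p <- M0) Dp src tgt toll w s t P p)%:~R)
                    (d2 := (\sum_(p <- M1) Dp src tgt toll w s t P p)%:~R)).
- exact: alpha_ge1.
- exact: alpha_ge1.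
- exact: alpha_ge1.
- exact: alpha_comb.
- by rewrite ler0z.
- by rewrite hVP -k5 intrD.
- by rewrite -intrB ler_int.
- by rewrite -intrB ler_int.
- exact: hlt.
Qed.
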